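(* Let $\mathcal{L}$ be a family of balanced algebraic laws over a signature $\Sigma$. Then the geometry monoid $\mathcal{G}(\mathcal{L})$ is an inverse monoid.
   Context: Terms $T_\Sigma(V)$ over an infinite set $V$ of variables; an algebraic law $l=r$ is balanced if the same variables occur in $l$ and $r$. Addresses are finite sequences of positive integers, $t/\alpha$ the subterm of $t$ at address $\alpha$. For an oriented law $L=(l,r)$ and an address $\alpha$, the partial operator $O^{+}_{L,\alpha}$ maps $t$ to $t'$ iff $t/\alpha=l\sigma$ for some substitution $\sigma$ and $t'$ is obtained from $t$ by replacing the $\alpha$-th subterm by $r\sigma$; $O^{-}_{L,\alpha}$ is its inverse partial map. Operators act on the right and $f\bullet g$ means ''$f$ then $g$''. The geometry monoid $\mathcal{G}(\mathcal{L})$ is the monoid of partial maps generated by all $O^{\pm}_{L,\alpha}$ under $\bullet$ (it may contain the empty map). *)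

(* Defs.v *)
From Stdlib Require Import List Arith.
Import ListNotations.
Set Implicit Arguments.

Section Terms.
Variables (Sigma : Type) (ar : Sigma -> nat) (V : Type).

Inductive term : Type :=
| Var : V -> term
| App : Sigma -> list term -> term.

Fixpoint wf (t : term) : Prop :=
  match t with
  | Var _ => True
  | App f args => length args = ar f /\
      (fix wfl (l : list term) : Prop :=
         match l with [] => True | u :: l' => wf u /\ wfl l' end) args
  end.

(* T_Sigma(V) is {t | wf t} *)

Fixpoint occurs (x : V) (t : term) : Prop :=
  match t with
  | Var y => x = y
  | App _ args =>
      (fix occl (l : list term) : Prop :=
         match l with [] => False | u :: l' => occurs x u \/ occl l' end) args
  end.

Definition balanced (l r : term) : Prop := forall x, occurs x l <-> occurs x r.

Fixpoint subst (s : V -> term) (t : term) : term :=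
  match t with
  | Var x => s x
  | App f args => App f (map (subst s) args)
  end.

(* addresses: finite sequences of positive integers; i refers to the i-th
   argument (1-based) *)
Definition address := list nat.

Fixpoint subterm (t : term) (a : address) : option term :=
  match a with
  | [] => Some t
  | i :: a' =>
      match t with
      | Var _ => None
      | App f args =>
          match i with
          | 0 => None
          | S j => match nth_error args j with
                   | Some u => subterm u a'
                   | None => None
                   end
          end
      end
  end.

Fixpoint replace_nth (l : list term) (j : nat) (u : term) : list term :=
  match l, j with
  | [], _ => []
  | _ :: l', 0 => u :: l'
  | v :: l', S j' => v :: replace_nth l' j' u
  end.

Fixpoint replace (t : term) (a : address) (u : term) : option term :=
  match a with
  | [] => Some u
  | i :: a' =>
      match t with
      | Var _ => None
      | App f args =>
          match i with
          | 0 => None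
          | S j => match nth_error args j with
                   | Some v => match replace v a' u with
                               | Some v' => Some (App f (replace_nth args j v'))
                               | None => None
                               end
                   | None => None
                   end
          end
      end
  end.

(* partial maps on T_Sigma(V), represented by their graphs *)
Definition pmap := term -> term -> Prop.

Definition Oplus (l r : term) (a : address) : pmap :=
  fun t t' => wf t /\ wf t' /\
    exists s : V -> term, (forall x, wf (s x)) /\
      subterm t a = Some (subst s l) /\ replace t a (subst s r) = Some t'.

Definition Ominus (l r : term) (a : address) : pmap :=
  fun t t' => Oplus l r a t' t.

(* f \bullet g : "f then g" *)
Definition pcomp (f g : pmap) : pmap :=
  fun t t'' => exists t', f t t' /\ g t' t''.

Definition pid : pmap := fun t t' => wf t /\ t = t'.

Inductive geom (L : term -> term -> Prop) : pmap -> Prop :=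
| geom_id : geom L pid
| geom_plus : forall l r a, L l r -> geom L (Oplus l r a)
| geom_minus : forall l r a, L l r -> geom L (Ominus l r a)
| geom_comp : forall f g, geom L f -> geom L g -> geom L (pcomp f g).

End Terms.

Definition inverse_monoid (X : Type) (M : X -> Prop) (op : X -> X -> X) (e : X)
  : Prop :=
  M e /\ (forall f g, M f -> M g -> M (op f g)) /\
  (forall f g h, M f -> M g -> M h -> op (op f g) h = op f (op g h)) /\
  (forall f, M f -> op e f = f /\ op f e = f) /\
  (forall f, M f -> exists g, (M g /\ op (op f g) f = f /\ op (op g f) g = g) /\
     forall g', M g' -> op (op f g') f = f -> op (op g' f) g' = g' -> g' = g).

(* Main.v *)
Require Import Defs.
From Stdlib Require Import List Arith FunctionalExtensionality PropExtensionality.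
Import ListNotations.
Set Implicit Arguments.

Definition term_ind' (Sigma V : Type) (P : term Sigma V -> Prop)
  (HV : forall x, P (Var Sigma x))
  (HA : forall f args, Forall P args -> P (App f args)) : forall t, P t :=
  fix F t := match t with
  | Var _ x => HV x
  | App f args => HA f args ((fix G l := match l return Forall P l with
        | [] => Forall_nil _ | u :: l' => Forall_cons _ (F u) (G l') end) args)
  end.

Lemma occurs_App (Sigma V : Type) (x : V) (f : Sigma) (args : list (term Sigma V)) :
  occurs x (App f args) <-> exists u, In u args /\ occurs x u.
Proof.
  induction args as [|a args IH]; simpl.
  - split; [tauto| intros [u [[] _]]].
  - change ((fix occl (l : list (term Sigma V)) : Prop :=
         match l with [] => False | u :: l' => occurs x u \/ occl l' end) args)
      with (occurs x (App f args)).
    rewrite IH. split.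
    + intros [H|[u [Hu Hx]]]; eauto.
    + intros [u [[<-|Hu] Hx]]; eauto.
Qed.

Lemma subst_agree (Sigma V : Type) (s1 s2 : V -> term Sigma V) (t : term Sigma V) :
  subst s1 t = subst s2 t -> forall x, occurs x t -> s1 x = s2 x.
Proof.
  induction t as [y|f args HF] using term_ind'; simpl.
  - intros H x ->. exact H.
  - intros H x Hx. apply (proj1 (occurs_App x f args)) in Hx. destruct Hx as [u [Hu Hx]].
    injection H as H.
    rewrite Forall_forall in HF. apply (HF u Hu); auto.
    clear HF Hx. revert H; induction args as [|a args IH]; intro H; [destruct Hu|].
    simpl in H. injection H as H1 H2. destruct Hu as [<-|Hu]; auto.
Qed.

Lemma subst_ext (Sigma V : Type) (s1 s2 : V -> term Sigma V) (t : term Sigma V) :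
  (forall x, occurs x t -> s1 x = s2 x) -> subst s1 t = subst s2 t.
Proof.
  induction t as [y|f args HF] using term_ind'; simpl.
  - intros H. apply H. reflexivity.
  - intros H. f_equal. rewrite Forall_forall in HF. apply map_ext_in.
    intros u Hu. apply HF; auto. intros x Hx. apply H. apply (proj2 (occurs_App x f args)). eauto.
Qed.


Lemma nth_error_replace_nth (Sigma V : Type) (l : list (term Sigma V)) j u v :
  nth_error l j = Some v -> nth_error (replace_nth l j u) j = Some u.
Proof.
  revert j; induction l as [|a l IH]; intros [|j]; simpl; try discriminate; auto.
Qed.

Lemma replace_nth_twice (Sigma V : Type) (l : list (term Sigma V)) j u w :
  replace_nth (replace_nth l j u) j w = replace_nth l j w.
Proof.
  revert j; induction l as [|a l IH]; intros [|j]; simpl; auto. now rewrite IH.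
Qed.

Lemma replace_nth_same (Sigma V : Type) (l : list (term Sigma V)) j v :
  nth_error l j = Some v -> replace_nth l j v = l.
Proof.
  revert j; induction l as [|a l IH]; intros [|j]; simpl; try discriminate.
  - now intros [= ->].
  - intros H. now rewrite IH.
Qed.

Lemma replace_subterm (Sigma V : Type) (a : address) : forall (t w v : term Sigma V),
  replace t a w = Some v -> subterm v a = Some w.
Proof.
  induction a as [|i a IH]; intros t w v; simpl.
  - congruence.
  - destruct t as [x|f args]; [discriminate|]. destruct i as [|j]; [discriminate|].
    destruct (nth_error args j) as [v0|] eqn:E; [|discriminate].
    destruct (replace v0 a w) as [v0'|] eqn:E2; [|discriminate].
    intros [= <-]. erewrite nth_error_replace_nth by eauto. eauto.
Qed.

Lemma replace_back (Sigma V : Type) (a : address) : forall (t w0 w v : term Sigma V),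
  subterm t a = Some w0 -> replace t a w = Some v -> replace v a w0 = Some t.
Proof.
  induction a as [|i a IH]; intros t w0 w v; simpl.
  - congruence.
  - destruct t as [x|f args]; [discriminate|]. destruct i as [|j]; [discriminate|].
    destruct (nth_error args j) as [v0|] eqn:E; [|discriminate].
    intros Hs.
    destruct (replace v0 a w) as [v0'|] eqn:E2; [|discriminate].
    intros [= <-]. erewrite nth_error_replace_nth by eauto.
    rewrite (IH _ _ _ _ Hs E2). rewrite replace_nth_twice.
    now rewrite (replace_nth_same _ _ E).
Qed.

Definition PI (Sigma V : Type) (ar : Sigma -> nat) (f : pmap Sigma V) : Prop :=
  (forall t u v, f t u -> f t v -> u = v) /\
  (forall t u v, f t v -> f u v -> t = u) /\
  (forall t u, f t u -> wf ar t /\ wf ar u).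

Lemma PI_Oplus (Sigma V : Type) (ar : Sigma -> nat) (l r : term Sigma V) a :
  balanced l r -> PI ar (Oplus ar l r a).
Proof.
  intros Hb. split; [|split].
  - intros t u v [_ [_ [s1 [_ [H1 R1]]]]] [_ [_ [s2 [_ [H2 R2]]]]].
    rewrite H1 in H2. injection H2 as H2.
    assert (subst s1 r = subst s2 r) as E.
    { apply subst_ext. intros x Hx. apply (subst_agree _ _ _ H2). now apply Hb. }
    rewrite E in R1. congruence.
  - intros t u v [_ [_ [s1 [_ [H1 R1]]]]] [_ [_ [s2 [_ [H2 R2]]]]].
    pose proof (replace_subterm _ _ _ R1) as S1.
    pose proof (replace_subterm _ _ _ R2) as S2.
    rewrite S1 in S2. injection S2 as S2.
    assert (subst s1 l = subst s2 l) as E.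
    { apply subst_ext. intros x Hx. apply (subst_agree _ _ _ S2). now apply Hb. }
    pose proof (replace_back _ _ _ H1 R1) as B1.
    pose proof (replace_back _ _ _ H2 R2) as B2.
    rewrite E in B1. congruence.
  - intros t u [H1 [H2 _]]. auto.
Qed.

Definition conv (Sigma V : Type) (f : pmap Sigma V) : pmap Sigma V := fun t u => f u t.

Lemma rel_ext (Sigma V : Type) (f g : pmap Sigma V) :
  (forall t u, f t u <-> g t u) -> f = g.
Proof.
  intros H. apply functional_extensionality; intro t.
  apply functional_extensionality; intro u. apply propositional_extensionality. auto.
Qed.

Lemma PI_geom (Sigma V : Type) (ar : Sigma -> nat) L f :
  (forall l r, L l r -> balanced l r) -> geom ar L f -> PI (V:=V) ar f.
Proof.
  intros Hb G. induction G as [| l r a HL | l r a HL | f g Gf [F1 [F2 F3]] Gg [G1 [G2 G3]]].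
  - split; [|split]; unfold pid.
    + intros t u v [_ <-] [_ <-]; auto.
    + intros t u v [_ <-] [_ <-]; auto.
    + intros t u [H <-]; auto.
  - apply PI_Oplus; auto.
  - destruct (PI_Oplus ar a (Hb _ _ HL)) as [F1 [F2 F3]].
    unfold Ominus. split; [|split].
    + intros t u v H1 H2. eapply F2; eauto.
    + intros t u v H1 H2. eapply F1; eauto.
    + intros t u H. destruct (F3 _ _ H); auto.
  - unfold pcomp. split; [|split].
    + intros t u v [m1 [A1 B1]] [m2 [A2 B2]].
      assert (m1 = m2) by eauto. subst. eauto.
    + intros t u v [m1 [A1 B1]] [m2 [A2 B2]].
      assert (m1 = m2) by eauto. subst. eauto.
    + intros t u [m [A B]]. destruct (F3 _ _ A), (G3 _ _ B); auto.
Qed.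

Lemma geom_conv (Sigma V : Type) (ar : Sigma -> nat) L (f : pmap Sigma V) :
  geom ar L f -> geom ar L (conv f).
Proof.
  intros G. induction G as [| l r a HL | l r a HL | f g Gf IHf Gg IHg].
  - replace (conv (@pid _ ar V)) with (pid (V:=V) ar). constructor.
    apply rel_ext. unfold conv, pid. intros t u; split; intros [H ->]; auto.
  - apply geom_minus; auto.
  - apply geom_plus; auto.
  - replace (conv (pcomp f g)) with (pcomp (conv g) (conv f)).
    + constructor; auto.
    + apply rel_ext. unfold conv, pcomp. intros t u; split; intros [m [A B]]; eauto.
Qed.

Theorem proposition1p8 (Sigma : Type) (ar : Sigma -> nat) (V : Type)
  (V_infinite : exists i : nat -> V, forall m n, i m = i n -> m = n)
  (L : term Sigma V -> term Sigma V -> Prop)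
  (L_wf : forall l r, L l r -> wf ar l /\ wf ar r)
  (L_balanced : forall l r, L l r -> balanced l r) :
  inverse_monoid (geom ar L) (@pcomp Sigma V) (@pid Sigma ar V).
Proof.
  split; [constructor|]. split; [intros; constructor; auto|].
  split.
  { intros f g h _ _ _. apply rel_ext. unfold pcomp. intros t u; split.
    - intros [m [[k [A B]] C]]. eauto.
    - intros [k [A [m [B C]]]]. eauto. }
  split.
  { intros f Gf. destruct (PI_geom L_balanced Gf) as [_ [_ F3]].
    split; apply rel_ext; unfold pcomp, pid; intros t u; split.
    - intros [m [[W <-] B]]; auto.
    - intros H. exists t. destruct (F3 _ _ H). auto.
    - intros [m [A [W <-]]]; auto.
    - intros H. exists u. destruct (F3 _ _ H). auto. }
  intros f Gf. destruct (PI_geom L_balanced Gf) as [F1 [F2 F3]].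
  exists (conv f). split; [split; [|split]|].
  - apply geom_conv; auto.
  - apply rel_ext; unfold pcomp, conv; intros t u; split.
    + intros [m [[k [A B]] C]]. assert (t = m) by eauto. subst; auto.
    + intros H. exists t. split; [exists u|]; auto.
  - apply rel_ext; unfold pcomp, conv; intros t u; split.
    + intros [m [[k [A B]] C]]. assert (t = m) by eauto. subst; auto.
    + intros H. exists t. split; [exists u|]; auto.
  - intros g' Gg' E1 E2. destruct (PI_geom L_balanced Gg') as [G1 [G2 G3]].
    apply rel_ext; unfold conv; intros t u; split.
    + intros H. pose proof H as H'. rewrite <- E2 in H'. destruct H' as [m [[k [A B]] C]].
      assert (k = u) by eauto. subst. assert (m = t) by eauto. subst; auto.
    + intros H. pose proof H as H'. rewrite <- E1 in H'. destruct H' as [m [[k [A B]] C]].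
      assert (k = t) by eauto. subst. assert (m = u) by eauto. subst; auto.
Qed.
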